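(* Let $\mathcal{G}=(V,E_L,E_R)$ be an achievement positional game and let $u,v\in V$ with $\{u\},\{v\}\notin E_L\cup E_R$, such that for every $e\in E_L\cup E_R$, $u\in e$ implies $v\in e$. Then: (i) $o(\mathcal{G}_u)\le_L o(\mathcal{G}_v)$; (ii) $o(\mathcal{G}^v)\le_L o(\mathcal{G}^u)$; (iii) if $u \neq v$, then $o(\mathcal{G}_u^v)\le_L o(\mathcal{G})\le_L o(\mathcal{G}_v^u)$.
   Context: A hypergraph is a pair $(V,E)$ with $V$ finite and $E\subseteq 2^V\setminus\{\varnothing\}$. An achievement positional game is a triple $\mathcal{G}=(V,E_L,E_R)$ where $(V,E_L)$ and $(V,E_R)$ are hypergraphs; elements of $E_L$ are blue edges, elements of $E_R$ are red edges. Two players, Left and Right, alternately pick a previously unpicked vertex of $V$ (either player may be designated to start). A player fills an edge when they have picked all its vertices. If Left fills a blue edge before Right fills a red edge, Left wins; if Right fills a red edge before Left fills a blue edge, Right wins; if neither happens before all vertices are picked, the game is a draw. For a set of edges $E$ and a set of vertices $S$, let $E^{+S}=\{e\setminus S : e\in E\}$ and $E^{-S}=\{e\in E : e\cap S=\varnothing\}$. If Left has picked the set $V_L$ and Right the set $V_R$, the updated game is $\mathcal{G}_{V_L}^{V_R}=(V\setminus(V_L\cup V_R),\,E_L^{+V_L-V_R},\,E_R^{+V_R-V_L})$; singleton brackets and empty sub/superscripts are omitted (so $\mathcal{G}_u$: Left picked $u$; $\mathcal{G}^v$: Right picked $v$; $\mathcal{G}_u^v$: Left picked $u$ and Right picked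 $v$). The outcome $o(\mathcal{G})$ is the pair (result under optimal play when Left starts, result under optimal play when Right starts). The partial order $\le_L$ on outcomes is the componentwise order, where in each component results are ordered Right wins $<$ draw $<$ Left wins. *)

(* Defs.v *)
From mathcomp Require Import all_boot all_order.
Set Implicit Arguments. Unset Strict Implicit. Unset Printing Implicit Defensive.

Record game (T : finType) := Game {
  gV : {set T};
  gEL : {set {set T}};
  gER : {set {set T}} }.

Definition hypergraph (T : finType) (V : {set T}) (E : {set {set T}}) :=
  forall e, e \in E -> e != set0 /\ e \subset V.

Definition is_game (T : finType) (G : game T) :=
  hypergraph (gV G) (gEL G) /\ hypergraph (gV G) (gER G).

Definition eplus (T : finType) (E : {set {set T}}) (S : {set T}) :=
  [set e :\: S | e in E].
Definition eminus (T : finType) (E : {set {set T}}) (S : {set T}) :=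
  [set e in E | [disjoint e & S]].

Definition update (T : finType) (G : game T) (VL VR : {set T}) : game T :=
  Game (gV G :\: (VL :|: VR))
       (eminus (eplus (gEL G) VL) VR)
       (eminus (eplus (gER G) VR) VL).

Inductive result := RightWins | Draw | LeftWins.

Definition rank (r : result) : nat :=
  match r with RightWins => 0 | Draw => 1 | LeftWins => 2 end.

Definition rmax (a b : result) := if rank a <= rank b then b else a.
Definition rmin (a b : result) := if rank a <= rank b then a else b.

(* Value of the game under optimal play; [lt] = true iff Left is to move.
   A move on x fills an edge e of the mover's colour iff e \subset [set x]
   (i.e. the edge's remaining vertices are all picked).  The fuel n is the number of remaining vertices. *)
Fixpoint value (T : finType) (n : nat) (G : game T) (lt : bool) : result :=
  match n with
  | 0 => Draw
  | n'.+1 =>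
    if gV G == set0 then Draw else
    if lt then
      foldr (fun x acc => rmax
          (if [exists e in gEL G, e \subset [set x]] then LeftWins
           else value n' (update G [set x] set0) false) acc)
        RightWins (enum (gV G))
    else
      foldr (fun x acc => rmin
          (if [exists e in gER G, e \subset [set x]] then RightWins
           else value n' (update G set0 [set x]) true) acc)
        LeftWins (enum (gV G))
  end.

Definition outcome (T : finType) (G : game T) : result * result :=
  (value #|gV G| G true, value #|gV G| G false).

Definition outcome_le (o1 o2 : result * result) : Prop :=
  rank o1.1 <= rank o2.1 /\ rank o1.2 <= rank o2.2.

(* Main.v *)
Require Import Defs.
From mathcomp Require Import all_boot all_order.
Set Implicit Arguments. Unset Strict Implicit. Unset Printing Implicit Defensive.

Lemma rank_rmax a b : rank (rmax a b) = maxn (rank a) (rank b).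
Proof. by case: a; case: b. Qed.
Lemma rank_rmin a b : rank (rmin a b) = minn (rank a) (rank b).
Proof. by case: a; case: b. Qed.
Lemma rank_le2 r : rank r <= 2. Proof. by case: r. Qed.

Lemma fmax_ge (T : eqType) (f : T -> result) (s : seq T) x : x \in s ->
  rank (f x) <= rank (foldr (fun y acc => rmax (f y) acc) RightWins s).
Proof.
elim: s => //= y s IH; rewrite inE rank_rmax => /orP [/eqP ->|/IH h].
  exact: leq_maxl.
exact: leq_trans h (leq_maxr _ _).
Qed.

Lemma fmax_le (T : eqType) (f : T -> result) (s : seq T) r :
  (forall x, x \in s -> rank (f x) <= r) ->
  rank (foldr (fun y acc => rmax (f y) acc) RightWins s) <= r.
Proof.
elim: s => //= y s IH h; rewrite rank_rmax geq_max h ?mem_head //= IH // => x xs.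
by apply: h; rewrite inE xs orbT.
Qed.

Lemma fmin_le (T : eqType) (f : T -> result) (s : seq T) x : x \in s ->
  rank (foldr (fun y acc => rmin (f y) acc) LeftWins s) <= rank (f x).
Proof.
elim: s => //= y s IH; rewrite inE rank_rmin => /orP [/eqP ->|/IH h].
  exact: geq_minl.
exact: leq_trans (geq_minr _ _) h.
Qed.

Lemma fmin_ge (T : eqType) (f : T -> result) (s : seq T) r : r <= 2 ->
  (forall x, x \in s -> r <= rank (f x)) ->
  r <= rank (foldr (fun y acc => rmin (f y) acc) LeftWins s).
Proof.
move=> r2; elim: s => //= y s IH h; rewrite rank_rmin leq_min h ?mem_head //= IH // => x xs.
by apply: h; rewrite inE xs orbT.
Qed.

Definition lterm (T : finType) n (G : game T) x :=
  if [exists e in gEL G, e \subset [set x]] then LeftWins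
  else value n (update G [set x] set0) false.
Definition rterm (T : finType) n (G : game T) x :=
  if [exists e in gER G, e \subset [set x]] then RightWins
  else value n (update G set0 [set x]) true.

Lemma valueSL (T : finType) n (G : game T) : value n.+1 G true =
  if gV G == set0 then Draw else
  foldr (fun x acc => rmax (lterm n G x) acc) RightWins (enum (gV G)).
Proof. by []. Qed.
Lemma valueSR (T : finType) n (G : game T) : value n.+1 G false =
  if gV G == set0 then Draw else
  foldr (fun x acc => rmin (rterm n G x) acc) LeftWins (enum (gV G)).
Proof. by []. Qed.

Lemma valL_ge (T : finType) n (G : game T) x : x \in gV G ->
  rank (lterm n G x) <= rank (value n.+1 G true).
Proof.
move=> xV; rewrite valueSL; have -> : (gV G == set0) = false.
  by apply/negbTE/set0Pn; exists x.
by apply: fmax_ge; rewrite mem_enum.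
Qed.
Lemma valL_le (T : finType) n (G : game T) r : gV G != set0 ->
  (forall x, x \in gV G -> rank (lterm n G x) <= r) -> rank (value n.+1 G true) <= r.
Proof. by move=> /negbTE h H; rewrite valueSL h; apply: fmax_le => x; rewrite mem_enum; apply: H. Qed.
Lemma valR_le (T : finType) n (G : game T) x : x \in gV G ->
  rank (value n.+1 G false) <= rank (rterm n G x).
Proof.
move=> xV; rewrite valueSR; have -> : (gV G == set0) = false.
  by apply/negbTE/set0Pn; exists x.
by apply: fmin_le; rewrite mem_enum.
Qed.
Lemma valR_ge (T : finType) n (G : game T) r : gV G != set0 -> r <= 2 ->
  (forall x, x \in gV G -> r <= rank (rterm n G x)) -> r <= rank (value n.+1 G false).
Proof. by move=> /negbTE h r2 H; rewrite valueSR h; apply: fmin_ge => // x; rewrite mem_enum; apply: H. Qed.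

Lemma eplus0 (T : finType) (E : {set {set T}}) : eplus E set0 = E.
Proof.
apply/setP => f; apply/imsetP/idP => [[e eE ->]|fE]; first by rewrite setD0.
by exists f; rewrite ?setD0.
Qed.
Lemma eminus0 (T : finType) (E : {set {set T}}) : eminus E set0 = E.
Proof.
by apply/setP => f; rewrite inE -setI_eq0 setI0 eqxx andbT.
Qed.
Lemma disj1 (T : finType) (f : {set T}) x : [disjoint f & [set x]] = (x \notin f).
Proof. by rewrite disjoint_sym disjoints1. Qed.

Lemma inEL_L (T : finType) (G : game T) x f :
  reflect (exists2 e, e \in gEL G & f = e :\ x) (f \in gEL (update G [set x] set0)).
Proof. by rewrite /= eminus0; apply: (iffP imsetP). Qed.
Lemma inER_L (T : finType) (G : game T) x f :
  (f \in gER (update G [set x] set0)) = (f \in gER G) && (x \notin f).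
Proof. by rewrite /= /eminus eplus0 inE disj1. Qed.
Lemma inEL_R (T : finType) (G : game T) x f :
  (f \in gEL (update G set0 [set x])) = (f \in gEL G) && (x \notin f).
Proof. by rewrite /= /eminus eplus0 inE disj1. Qed.
Lemma inER_R (T : finType) (G : game T) x f :
  reflect (exists2 e, e \in gER G & f = e :\ x) (f \in gER (update G set0 [set x])).
Proof. by rewrite /= eminus0; apply: (iffP imsetP). Qed.
Lemma inV_L (T : finType) (G : game T) x z :
  (z \in gV (update G [set x] set0)) = (z != x) && (z \in gV G).
Proof. by rewrite /= !inE orbF. Qed.
Lemma inV_R (T : finType) (G : game T) x z :
  (z \in gV (update G set0 [set x])) = (z != x) && (z \in gV G).
Proof. by rewrite /= !inE. Qed.

Lemma mono (T : finType) (phi : T -> T) : injective phi -> forall n (G H : game T),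
  gV H = phi @: gV G ->
  (forall e, e \in gEL G -> exists2 f, f \in gEL H & f \subset phi @: e) ->
  (forall f, f \in gER H -> exists2 e, e \in gER G & phi @: e \subset f) ->
  forall b, rank (value n G b) <= rank (value n H b).
Proof.
move=> inj n; elim: n => [//|n IH] G H hV hL hR b.
have VG : (gV H == set0) = (gV G == set0) by rewrite hV imset_eq0.
case: b.
- have [G0|GN] := boolP (gV G == set0).
    by rewrite !valueSL VG G0.
  apply: valL_le => // x xV.
  apply: leq_trans (valL_ge n (_ : phi x \in gV H)); last by rewrite hV imset_f.
  rewrite /lterm; case: ifP => [/existsP [e /andP [eL ex]]|_].
    have [f fL fs] := hL e eL.
    rewrite ifT //; apply/existsP; exists f; rewrite fL /=.
    apply: (subset_trans fs); rewrite -imset_set1; exact: imsetS.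
  case: ifP => _; first exact: rank_le2.
  apply: IH.
  + apply/setP => z; rewrite inV_L hV; apply/idP/imsetP.
      move=> /andP [zx /imsetP [y yV zE]]; subst z; exists y => //; rewrite inV_L yV andbT.
      by apply: contra zx => /eqP ->.
    move=> [y]; rewrite inV_L => /andP [yx yV] ->; rewrite imset_f // andbT.
    by rewrite (inj_eq inj).
  + move=> e' /inEL_L [e eL ->]; have [f fL fs] := hL e eL.
    exists (f :\ phi x); first by apply/inEL_L; exists f.
    apply/subsetP => z; rewrite !inE => /andP [zx zf].
    have /imsetP [y ye zE] := subsetP fs z zf; subst z.
    rewrite imset_f // !inE ye andbT; by apply: contra zx => /eqP ->.
  + move=> f; rewrite inER_L => /andP [fR xf]; have [e eR es] := hR f fR.
    exists e => //; rewrite inER_L eR /=.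
    by apply: contra xf => xe; apply: (subsetP es); rewrite imset_f.
- have [G0|GN] := boolP (gV G == set0).
    by rewrite !valueSR VG G0.
  apply: valR_ge; [by rewrite VG | exact: rank_le2 |] => y.
  rewrite hV => /imsetP [x xV ->].
  apply: leq_trans (valR_le n xV) _.
  rewrite /rterm; case: ifP => // hx.
  case: ifP => [/existsP [f /andP [fR fx]]|_].
    have [e eR es] := hR f fR.
    suff : [exists e in gER G, e \subset [set x]] by rewrite hx.
    apply/existsP; exists e; rewrite eR /=.
    apply/subsetP => z ze; have := subsetP fx _ (subsetP es _ (imset_f phi ze)).
    by rewrite !inE (inj_eq inj).
  apply: IH.
  + apply/setP => z; rewrite inV_R hV; apply/idP/imsetP.
      move=> /andP [zx /imsetP [w wV zE]]; subst z; exists w => //; rewrite inV_R wV andbT.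
      by apply: contra zx => /eqP ->.
    move=> [w]; rewrite inV_R => /andP [wx wV] ->; rewrite imset_f // andbT.
    by rewrite (inj_eq inj) wx.
  + move=> e; rewrite inEL_R => /andP [eL xe]; have [f fL fs] := hL e eL.
    exists f => //; rewrite inEL_R fL /=.
    apply: contra xe => /(subsetP fs) /imsetP [w we /inj ->] //.
  + move=> f' /inER_R [f fR ->]; have [e eR es] := hR f fR.
    exists (e :\ x); first by apply/inER_R; exists e.
    apply/subsetP => z /imsetP [w]; rewrite !inE => /andP [wx we] ->.
    rewrite (inj_eq inj) wx /=; apply: (subsetP es); exact: imset_f.
Qed.

Lemma mono_id (T : finType) n (G H : game T) :
  gV H = gV G ->
  (forall e, e \in gEL G -> exists2 f, f \in gEL H & f \subset e) ->
  (forall f, f \in gER H -> exists2 e, e \in gER G & e \subset f) ->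
  forall b, rank (value n G b) <= rank (value n H b).
Proof.
move=> hV hL hR; apply: (@mono T (fun x => x)) => //; first by rewrite imset_id.
  by move=> e /hL [f fL fs]; exists f; rewrite ?imset_id.
by move=> f /hR [e eR es]; exists e; rewrite ?imset_id.
Qed.

Lemma sub0 (T : finType) (e f : {set T}) v y :
  e \subset f :\ v -> f \subset [set y] -> (y == v) || (y \notin f) -> e = set0.
Proof.
move=> es fy h; apply/setP => z; rewrite inE; apply/negbTE/negP => ze.
have := subsetP es z ze; rewrite !inE => /andP [zv zf].
have := subsetP fy z zf; rewrite inE => /eqP zy; subst z.
by move: h; rewrite (negbTE zv) zf.
Qed.

Lemma pair_uv (T : finType) (u v : T) n (A B : game T) : u != v ->
  u \in gV B -> v \in gV B ->
  (forall z, (z \in gV A) = [&& z != u, z != v & z \in gV B]) ->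
  (forall f, f \in gEL B -> u \in f -> v \in f) ->
  (forall f, f \in gER B -> u \in f -> v \in f) ->
  (forall e, e \in gEL A -> exists2 f, f \in gEL B & (v \notin f) && (f :\ u \subset e)) ->
  (forall f, f \in gER B -> u \notin f -> exists2 e, e \in gER A & e \subset f :\ v) ->
  set0 \notin gER A ->
  rank (value n A false) <= rank (rterm n.+1 B u) /\
  rank (value n A false) <= rank (rterm n.+1 B v).
Proof.
move=> uv hu hv hV iL iR bL rR e0; split.
- rewrite /rterm; case: ifP => [/existsP [f /andP [fR fu]]|_].
    exfalso.
    have uf : u \notin f.
      apply/negP => uf; have := subsetP fu v (iR f fR uf).
      by rewrite inE eq_sym (negbTE uv).
    have [e eR es] := rR f fR uf.
    have e0' := sub0 es fu (introT orP (or_intror uf)).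
    by rewrite -e0' eR in e0.
  have h1 : rank (value n A false) <=
      rank (value n (update (update B set0 [set u]) [set v] set0) false).
    apply: mono_id.
    + apply/setP => z; rewrite inV_L inV_R hV.
      by case: (z != u); case: (z != v).
    + move=> e eL; have [f fL /andP [vf fe]] := bL e eL.
      have uf : u \notin f by apply: contra vf; exact: iL.
      exists (f :\ v); first by apply/inEL_L; exists f => //; rewrite inEL_R fL.
      apply/subsetP => z; rewrite !inE => /andP [zv zf]; apply: (subsetP fe).
      rewrite !inE zf andbT; apply/eqP => zu; by rewrite -zu zf in uf.
    + move=> f'; rewrite inER_L => /andP [/inER_R [f fR ->] vf'].
      have vf : v \notin f by apply: contra vf' => vf; rewrite !inE vf andbT eq_sym.
      have uf : u \notin f by apply: contra vf; exact: iR f fR.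
      have [e eR es] := rR f fR uf.
      exists e => //; apply/subsetP => z ze; have := subsetP es z ze.
      rewrite !inE => /andP [zv zf]; rewrite zf andbT.
      apply/eqP => zu; by rewrite zu (negbTE uf) in zf.
  apply: (leq_trans h1); apply: leq_trans _ (valL_ge n (_ : v \in gV (update B set0 [set u]))).
    rewrite /lterm; case: ifP => _; [exact: rank_le2 | exact: leqnn].
  by rewrite inV_R eq_sym uv hv.
- rewrite /rterm; case: ifP => [/existsP [f /andP [fR fv]]|_].
    exfalso.
    have uf : u \notin f.
      by apply/negP => uf; have := subsetP fv u uf; rewrite inE (negbTE uv).
    have [e eR es] := rR f fR uf.
    have e0' := sub0 es fv (introT orP (or_introl (eqxx v))).
    by rewrite -e0' eR in e0.
  have h1 : rank (value n A false) <=
      rank (value n (update (update B set0 [set v]) [set u] set0) false).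
    apply: mono_id.
    + apply/setP => z; rewrite inV_L inV_R hV.
      by case: (z != u); case: (z != v).
    + move=> e eL; have [f fL /andP [vf fe]] := bL e eL.
      exists (f :\ u) => //; apply/inEL_L; exists f => //; by rewrite inEL_R fL.
    + move=> f'; rewrite inER_L => /andP [/inER_R [f fR ->] uf'].
      have uf : u \notin f by apply: contra uf' => uf; rewrite !inE uf andbT.
      have [e eR es] := rR f fR uf.
      by exists e.
  apply: (leq_trans h1); apply: leq_trans _ (valL_ge n (_ : u \in gV (update B set0 [set v]))).
    rewrite /lterm; case: ifP => _; [exact: rank_le2 | exact: leqnn].
  by rewrite inV_R uv hu.
Qed.

Lemma pairL (T : finType) (u v : T) : u != v -> forall n (A B : game T),
  n = #|gV A| -> u \in gV B -> v \in gV B ->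
  (forall z, (z \in gV A) = [&& z != u, z != v & z \in gV B]) ->
  (forall f, f \in gEL B -> u \in f -> v \in f) ->
  (forall f, f \in gER B -> u \in f -> v \in f) ->
  (forall e, e \in gEL A -> exists2 f, f \in gEL B & (v \notin f) && (f :\ u \subset e)) ->
  (forall f, f \in gER B -> u \notin f -> exists2 e, e \in gER A & e \subset f :\ v) ->
  set0 \notin gER A ->
  forall b, rank (value n A b) <= rank (value n.+2 B b).
Proof.
move=> uv n; elim: n => [|n IH] A B hn hu hv hV iL iR bL rR e0 b.
- have A0 : gV A = set0 by apply/eqP; rewrite -cards_eq0 -hn.
  case: b.
    apply: leq_trans _ (valL_ge 1 hu).
    rewrite /lterm; case: ifP => // _.
    apply: valR_ge => //.
      by apply/set0Pn; exists v; rewrite inV_L eq_sym uv hv.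
    move=> y; rewrite inV_L => /andP [yu yV].
    rewrite /rterm; case: ifP => // /existsP [f /andP [fR fy]].
    move: fR; rewrite inER_L => /andP [fR uf].
    have [e eR es] := rR f fR uf.
    have yv : y = v.
      by have := hV y; rewrite A0 inE yu yV andbT /= => /esym /negbFE /eqP.
    have e0' := sub0 es fy (introT orP (or_introl (introT eqP yv))).
    by rewrite -e0' eR in e0.
  apply: valR_ge; [by apply/set0Pn; exists u | exact: rank_le2 |] => y yB.
  have [h1 h2] := pair_uv 0 uv hu hv hV iL iR bL rR e0.
  case: (y =P u) => [->|/eqP yu] //; case: (y =P v) => [->|/eqP yv] //.
  by have := hV y; rewrite A0 inE yu yv yB.
- have AN : gV A != set0 by rewrite -cards_eq0 -hn.
  case: b.
  + apply: valL_le => // x xA.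
    have := hV x; rewrite xA => /esym /and3P [xu xv xB].
    apply: leq_trans (valL_ge n.+2 xB).
    rewrite /lterm; case: ifP => [/existsP [e /andP [eL ex]] | _].
      have [f fL /andP [vf fe]] := bL e eL.
      rewrite ifT //; apply/existsP; exists f; rewrite fL /=.
      apply/subsetP => z zf; case: (z =P u) => [zu|/eqP zu].
        by subst z; have := iL f fL zf; rewrite (negbTE vf).
      by apply: (subsetP ex); apply: (subsetP fe); rewrite !inE zu zf.
    case: ifP => _; first exact: rank_le2.
    apply: IH.
    * have -> : gV (update A [set x] set0) = gV A :\ x by rewrite /= setU0.
      by move: hn; rewrite (cardsD1 x) xA add1n => -[].
    * by rewrite inV_L eq_sym xu hu.
    * by rewrite inV_L eq_sym xv hv.
    * move=> z; rewrite !inV_L hV.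
      by case: (z != x); case: (z != u); case: (z != v).
    * move=> f /inEL_L [g gL ->]; rewrite !inE => /andP [ux ug].
      by rewrite (iL g gL ug) andbT eq_sym.
    * by move=> f; rewrite inER_L => /andP [fR _]; exact: iR.
    * move=> e' /inEL_L [e eL ->]; have [f fL /andP [vf fe]] := bL e eL.
      exists (f :\ x); first by apply/inEL_L; exists f.
      rewrite !inE negb_and vf orbT /=.
      apply/subsetP => z; rewrite !inE => /and3P [zu zx zf]; rewrite zx /=.
      by apply: (subsetP fe); rewrite !inE zu zf.
    * move=> f; rewrite inER_L => /andP [fR xf] uf.
      have [e eR es] := rR f fR uf.
      exists e => //; rewrite inER_L eR /=; apply: contra xf => xe.
      by have := subsetP es x xe; rewrite !inE => /andP [_ ->].
    * by rewrite inER_L negb_and e0.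
  + apply: valR_ge; [by apply/set0Pn; exists u | exact: rank_le2 |] => y yB.
    have [h1 h2] := pair_uv n.+1 uv hu hv hV iL iR bL rR e0.
    case: (y =P u) => [->|/eqP yu] //; case: (y =P v) => [->|/eqP yv] //.
    have yA : y \in gV A by rewrite hV yu yv yB.
    apply: leq_trans (valR_le n yA) _.
    rewrite /rterm; case: ifP => // hA.
    case: ifP => [/existsP [f /andP [fR fy]]|_].
      exfalso.
      have uf : u \notin f.
        apply/negP => uf; have := subsetP fy v (iR f fR uf).
        by rewrite inE eq_sym (negbTE yv).
      have [e eR es] := rR f fR uf.
      suff : [exists e in gER A, e \subset [set y]] by rewrite hA.
      apply/existsP; exists e; rewrite eR /=.
      by apply: subset_trans es _; apply: subset_trans fy; apply: subsetDl.
    apply: IH.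
    * have -> : gV (update A set0 [set y]) = gV A :\ y by rewrite /= set0U.
      by move: hn; rewrite (cardsD1 y) yA add1n => -[].
    * by rewrite inV_R eq_sym yu hu.
    * by rewrite inV_R eq_sym yv hv.
    * move=> z; rewrite !inV_R hV.
      by case: (z != y); case: (z != u); case: (z != v).
    * by move=> f; rewrite inEL_R => /andP [fL _]; exact: iL.
    * move=> f /inER_R [g gR ->]; rewrite !inE => /andP [uy ug].
      by rewrite (iR g gR ug) andbT eq_sym.
    * move=> e; rewrite inEL_R => /andP [eL ye].
      have [f fL /andP [vf fe]] := bL e eL.
      exists f; last by rewrite vf.
      rewrite inEL_R fL /=; apply: contra ye => yf.
      by apply: (subsetP fe); rewrite !inE yf andbT.
    * move=> f' /inER_R [f fR ->] uf'.
      have uf : u \notin f by apply: contra uf' => uf; rewrite !inE uf andbT eq_sym.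
      have [e eR es] := rR f fR uf.
      exists (e :\ y); first by apply/inER_R; exists e.
      apply/subsetP => z; rewrite !inE => /andP [zy ze].
      by have := subsetP es z ze; rewrite !inE => /andP [zv zf]; rewrite zv zy zf.
    * apply/negP => /inER_R [e eR e0'].
      suff : [exists e in gER A, e \subset [set y]] by rewrite hA.
      apply/existsP; exists e; rewrite eR /=; apply/subsetP => z ze; rewrite inE.
      apply/negPn/negP => zy.
      have : z \in e :\ y by rewrite !inE zy ze.
      by rewrite -e0' inE.
Qed.

Definition dual (T : finType) (G : game T) := Game (gV G) (gER G) (gEL G).
Definition flip r := match r with RightWins => LeftWins | Draw => Draw | LeftWins => RightWins end.
Lemma flip_le a b : rank (flip a) <= rank (flip b) -> rank b <= rank a.
Proof. by case: a; case: b. Qed.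
Lemma flip_rmax a b : flip (rmax a b) = rmin (flip a) (flip b).
Proof. by case: a; case: b. Qed.
Lemma flip_rmin a b : flip (rmin a b) = rmax (flip a) (flip b).
Proof. by case: a; case: b. Qed.
Lemma upd_dual (T : finType) (G : game T) S1 S2 :
  update (dual G) S1 S2 = dual (update G S2 S1).
Proof. by rewrite /update /dual /= setUC. Qed.

Lemma value_dual (T : finType) n (G : game T) b :
  value n (dual G) (~~ b) = flip (value n G b).
Proof.
elim: n G b => [//|n IH] G b; case: b.
  rewrite valueSR valueSL /=; case: (gV G == set0) => //.
  elim: (enum (gV G)) => //= x s ->; rewrite flip_rmax /rterm /lterm /=.
  congr rmin; case: ifP => _ //; rewrite upd_dual; exact: (IH _ false).
rewrite valueSR valueSL /=; case: (gV G == set0) => //.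
elim: (enum (gV G)) => //= x s ->; rewrite flip_rmin /rterm /lterm /=.
congr rmax; case: ifP => _ //; rewrite upd_dual; exact: (IH _ true).
Qed.

Definition swap (T : eqType) (u v z : T) := if z == u then v else if z == v then u else z.
Lemma swapK (T : eqType) (u v : T) : involutive (swap u v).
Proof.
move=> z; rewrite /swap; case: (z =P u) => [->|/eqP zu]; first by rewrite eqxx; case: ifP => // /eqP.
case: (z =P v) => [->|/eqP zv]; first by rewrite eqxx.
by rewrite (negbTE zu) (negbTE zv).
Qed.
Lemma swap_inj (T : eqType) (u v : T) : injective (swap u v).
Proof. exact: can_inj (swapK u v). Qed.
Lemma memS (T : finType) (u v z : T) (S : {set T}) :
  (z \in swap u v @: S) = (swap u v z \in S).
Proof. by rewrite -{1}(swapK u v z) mem_imset //; exact: swap_inj. Qed.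
Lemma keyK (T : finType) (u v z : T) (g : {set T}) :
  (u \in g -> v \in g) -> z \in g :\ v -> swap u v z \in g :\ u.
Proof.
rewrite /swap !inE => h /andP [zv zg]; case: ifP => [/eqP zu|/negbT zu].
  by subst z; rewrite h // andbT eq_sym.
by rewrite (negbTE zv) zu zg.
Qed.

Lemma card_2pt (T : finType) (V : {set T}) u v : u \in V -> v \in V -> u != v ->
  #|V| = (#|V :\: ([set u] :|: [set v])|).+2.
Proof.
move=> uV vV uv; rewrite (cardsD1 u V) uV (cardsD1 v (V :\ u)) !inE eq_sym uv vV /=.
by rewrite setDDl.
Qed.

Lemma only1 (T : finType) (f : {set T}) v : f :\ v = set0 -> f != set0 -> f = [set v].
Proof.
move=> h /set0Pn [w wf]; apply/setP => z; rewrite inE; apply/idP/eqP => [zf|->].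
  apply/eqP; apply/negPn/negP => zv; have : z \in f :\ v by rewrite !inE zv zf.
  by rewrite h inE.
case: (w =P v) => [<- //|/eqP wv].
have : w \in f :\ v by rewrite !inE wv wf.
by rewrite h inE.
Qed.

Lemma swapC (T : eqType) (u v : T) : swap u v =1 swap v u.
Proof.
move=> z; rewrite /swap; case: (z =P u) => zu; case: (z =P v) => zv; by subst.
Qed.
Lemma swapV (T : finType) (V : {set T}) u v z : u \in V -> v \in V ->
  (swap u v z \in V :\ u) = (z \in V :\ v).
Proof.
move=> uV vV; apply/idP/idP => h; last exact: keyK.
have := keyK (fun _ : v \in V => uV) h.
by rewrite -swapC swapK.
Qed.
Lemma VL (T : finType) (G : game T) x : gV (update G [set x] set0) = gV G :\ x.
Proof. by rewrite /= setU0. Qed.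
Lemma VR (T : finType) (G : game T) x : gV (update G set0 [set x]) = gV G :\ x.
Proof. by rewrite /= set0U. Qed.
Unset Implicit Arguments.

Theorem lemma8 (T : finType) (G : game T) (u v : T) :
  is_game G ->
  u \in gV G -> v \in gV G ->
  [set u] \notin gEL G :|: gER G ->
  [set v] \notin gEL G :|: gER G ->
  (forall e, e \in gEL G :|: gER G -> u \in e -> v \in e) ->
  [/\ outcome_le (outcome (update G [set u] set0)) (outcome (update G [set v] set0)),
      outcome_le (outcome (update G set0 [set v])) (outcome (update G set0 [set u]))
    & (u != v ->
       outcome_le (outcome (update G [set u] [set v])) (outcome G) /\
       outcome_le (outcome G) (outcome (update G [set v] [set u])))].
Proof.
move=> [hgL hgR] uV vV nu nv imp.
have impL f : f \in gEL G -> u \in f -> v \in f by move=> fL; apply: imp; rewrite inE fL.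
have impR f : f \in gER G -> u \in f -> v \in f by move=> fR; apply: imp; rewrite inE fR orbT.
split.
- rewrite /outcome_le /outcome /=.
  have hV : gV (update G [set v] set0) = swap u v @: gV (update G [set u] set0).
    by apply/setP => z; rewrite memS !VL swapV.
  have hc : #|gV (update G [set v] set0)| = #|gV (update G [set u] set0)|.
    by rewrite hV card_imset //; exact: swap_inj.
  rewrite hc; split; apply: (mono (@swap_inj T u v)) hV _ _ _.
  + move=> e /inEL_L [g gL ->]; exists (g :\ v); first by apply/inEL_L; exists g.
    by apply/subsetP => z zg; rewrite memS; exact: keyK (impL g gL) zg.
  + move=> f; rewrite inER_L => /andP [fR vf]; exists f.
      by rewrite inER_L fR /=; apply: contra vf; exact: impR.
    apply/subsetP => z; rewrite memS => h.
    have : swap u v z \in f :\ v.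
      by rewrite !inE h andbT; apply/negP => /eqP e; move: h; rewrite e (negbTE vf).
    by move/(keyK (impR f fR)); rewrite swapK !inE => /andP [_ ->].
  + move=> e /inEL_L [g gL ->]; exists (g :\ v); first by apply/inEL_L; exists g.
    by apply/subsetP => z zg; rewrite memS; exact: keyK (impL g gL) zg.
  + move=> f; rewrite inER_L => /andP [fR vf]; exists f.
      by rewrite inER_L fR /=; apply: contra vf; exact: impR.
    apply/subsetP => z; rewrite memS => h.
    have : swap u v z \in f :\ v.
      by rewrite !inE h andbT; apply/negP => /eqP e; move: h; rewrite e (negbTE vf).
    by move/(keyK (impR f fR)); rewrite swapK !inE => /andP [_ ->].
- rewrite /outcome_le /outcome /=.
  have hV : gV (update G set0 [set u]) = swap u v @: gV (update G set0 [set v]).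
    by apply/setP => z; rewrite memS !VR swapC swapV.
  have hc : #|gV (update G set0 [set u])| = #|gV (update G set0 [set v])|.
    by rewrite hV card_imset //; exact: swap_inj.
  rewrite hc; split; apply: (mono (@swap_inj T u v)) hV _ _ _.
  + move=> e; rewrite inEL_R => /andP [eL ve]; exists e.
      by rewrite inEL_R eL /=; apply: contra ve; exact: impL.
    apply/subsetP => z ze; rewrite memS.
    have : z \in e :\ v by rewrite !inE ze andbT; apply/negP => /eqP e'; move: ze; rewrite e' (negbTE ve).
    by move/(keyK (impL e eL)); rewrite !inE => /andP [_ ->].
  + move=> f' /inER_R [f fR ->]; exists (f :\ v); first by apply/inER_R; exists f.
    apply/subsetP => z; rewrite memS => h; have := keyK (impR f fR) h.
    by rewrite swapK.
  + move=> e; rewrite inEL_R => /andP [eL ve]; exists e.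
      by rewrite inEL_R eL /=; apply: contra ve; exact: impL.
    apply/subsetP => z ze; rewrite memS.
    have : z \in e :\ v by rewrite !inE ze andbT; apply/negP => /eqP e'; move: ze; rewrite e' (negbTE ve).
    by move/(keyK (impL e eL)); rewrite !inE => /andP [_ ->].
  + move=> f' /inER_R [f fR ->]; exists (f :\ v); first by apply/inER_R; exists f.
    apply/subsetP => z; rewrite memS => h; have := keyK (impR f fR) h.
    by rewrite swapK.
- move=> uv; split.
  + rewrite /outcome_le /outcome.
    rewrite [#|gV G|](card_2pt uV vV uv).
    have Q b : rank (value #|gV (update G [set u] [set v])| (update G [set u] [set v]) b)
       <= rank (value (#|gV (update G [set u] [set v])|).+2 G b).
      apply: (pairL uv (erefl _) uV vV _ impL impR).
      * by move=> z; rewrite /= !inE negb_or andbA.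
      * move=> e; rewrite /= inE => /andP [/imsetP [f fL ->] dis].
        exists f => //; rewrite subxx andbT; rewrite disj1 in dis.
        by apply: contra dis => vf; rewrite !inE vf andbT eq_sym.
      * move=> f fR uf; exists (f :\ v) => //.
        rewrite /= inE disj1; apply/andP; split; first by apply/imsetP; exists f.
        by rewrite !inE negb_and uf orbT.
      * apply/negP; rewrite /= inE => /andP [/imsetP [f fR fe] _].
        have f1 := only1 (esym fe) (proj1 (hgR f fR)).
        by move: nv; rewrite -f1 inE fR orbT.
    by split; apply: Q.
  + rewrite /outcome_le /outcome.
    have vu : v != u by rewrite eq_sym.
    set H := update G [set v] [set u].
    have hc : #|gV G| = (#|gV H|).+2 by rewrite /H /= setUC; exact: card_2pt.
    rewrite hc.
    have Q b : rank (value #|gV H| (dual H) b) <= rank (value (#|gV H|).+2 (dual G) b).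
      apply: (@pairL T u v uv _ (dual H) (dual G) (erefl _) uV vV _ impR impL).
      * by move=> z; rewrite /= !inE negb_or; case: (z == u); case: (z == v).
      * move=> e; rewrite /= inE => /andP [/imsetP [f fR ->] dis].
        exists f => //; rewrite subxx andbT; rewrite disj1 in dis.
        by apply: contra dis => vf; rewrite !inE vf andbT eq_sym.
      * move=> f fL uf; exists (f :\ v) => //.
        rewrite /= inE disj1; apply/andP; split; first by apply/imsetP; exists f.
        by rewrite !inE negb_and uf orbT.
      * apply/negP; rewrite /= inE => /andP [/imsetP [f fL fe] _].
        have f1 := only1 (esym fe) (proj1 (hgL f fL)).
        by move: nv; rewrite -f1 inE fL.
    by split; apply: flip_le; rewrite -!value_dual; apply: Q.
Qed.
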